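(* For every co-comparability graph $G$, $\operatorname{box}(G)\le 2\Delta(G)+1$, where $\Delta(G)$ is the maximum degree of $G$.
   Context: A comparability graph is a graph whose vertex set admits a partial order such that two distinct vertices are adjacent iff they are comparable; $G$ is a co-comparability graph if its complement is a comparability graph. The boxicity $\operatorname{box}(G)$ is the minimum $b$ such that $G$ is the intersection graph of axis-parallel boxes in $\mathbb{R}^b$ (products of $b$ closed intervals), one box per vertex. *)

(* Defs.v *)
From mathcomp Require Import all_boot.
From Stdlib Require Import Reals.
Set Implicit Arguments. Unset Strict Implicit. Unset Printing Implicit Defensive.

Definition simple_graph (T : finType) (e : rel T) : Prop :=
  (forall x y, e x y = e y x) /\ (forall x, e x x = false).

Definition partial_order (T : finType) (le : rel T) : Prop :=
  (forall x, le x x) /\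
  (forall x y, le x y -> le y x -> x = y) /\
  (forall x y z, le x y -> le y z -> le x z).

Definition comparability (T : finType) (e : rel T) : Prop :=
  exists le : rel T, partial_order le /\
    forall x y, x != y -> (e x y <-> (le x y || le y x)).

Definition compl_graph (T : finType) (e : rel T) : rel T :=
  fun x y => (x != y) && ~~ e x y.

Definition cocomparability (T : finType) (e : rel T) : Prop :=
  comparability (compl_graph e).

Definition box_rep (T : finType) (e : rel T) (b : nat) : Prop :=
  exists (l r : 'I_b -> T -> R),
    (forall i v, (l i v <= r i v)%R) /\
    forall u v, u != v ->
      (e u v <-> forall i, (l i u <= r i v)%R /\ (l i v <= r i u)%R).

Definition boxicity_le (T : finType) (e : rel T) (k : nat) : Prop :=
  exists b, (b <= k)%N /\ box_rep e b.

(* maximum degree Delta(G) (0 for the empty graph) *)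
Definition max_degree (T : finType) (e : rel T) : nat :=
  \max_(v : T) #|[set u | e v u]|.

(* Main.v *)
Require Import Defs.
From mathcomp Require Import all_boot.
From Stdlib Require Import Reals.
From mathcomp Require Import zify.

Theorem theorem8 (T : finType) (e : rel T) :
  simple_graph e -> cocomparability e ->
  boxicity_le e (2 * max_degree e + 1).
Proof.
move=> [esym eirr] [le [[lerefl [leanti letrans]] hcomp]].
have hnc : forall x y, x != y -> ~~ e x y -> le x y || le y x.
  by move=> x y xy nxy; apply/(hcomp x y xy); rewrite /compl_graph xy.
have hc : forall x y, x != y -> le x y || le y x -> ~~ e x y.
  by move=> x y xy /(hcomp x y xy); rewrite /compl_graph xy.
pose f v := #|[set u | le u v]|.
have fmono : forall x y, x != y -> le x y -> f x < f y.
  move=> x y xy lxy; apply: proper_card; apply/properP; split.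
    by apply/subsetP => u; rewrite !inE => /letrans; apply.
  exists y; rewrite !inE ?lerefl //; apply/negP => lyx.
  by move/eqP: xy; apply; apply: leanti.
pose N := #|T|.
pose p v := f v * N + enum_rank v.
have pmono : forall x y, x != y -> le x y -> p x < p y.
  move=> x y xy lxy; have := fmono x y xy lxy; rewrite /p.
  have := ltn_ord (enum_rank x); rewrite -/N => h1 h2; nia.
have pinj : injective p.
  move=> x y pxy; apply: enum_rank_inj; apply: val_inj => /=.
  have h1 := ltn_ord (enum_rank x); have h2 := ltn_ord (enum_rank y).
  have : p x %% N = p y %% N by rewrite pxy.
  by rewrite /p !modnMDl !modn_small.
have umb : forall x v w, p x < p v -> p v < p w -> e x w -> ~~ e v w -> e x v.
  move=> x v w h1 h2 exw nvw; case exv: (e x v) => //.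
  have xv : x != v by apply/eqP => E; rewrite E ltnn in h1.
  have vw : v != w by apply/eqP => E; rewrite E ltnn in h2.
  have xw : x != w by apply/eqP => E; rewrite E in exw; rewrite eirr in exw.
  have /orP[lxv|lvx] := hnc x v xv (negbT exv); last first.
    have vx : v != x by rewrite eq_sym.
    have := pmono v x vx lvx; lia.
  have /orP[lvw|lwv] := hnc v w vw nvw; last first.
    have wv : w != v by rewrite eq_sym.
    have := pmono w v wv lwv; lia.
  by have := hc x w xw; rewrite (letrans _ _ _ lxv lvw) exw => /(_ isT).
pose D := max_degree e.
have degN : forall v, #|[set u | e v u]| <= D.
  by move=> v; rewrite /D /max_degree; apply: (leq_bigmax (F := fun v => #|[set u | e v u]|)).
pose r v := #|[set z | p z < p v]|.
have rmono : forall a b, p a < p b -> r a < r b.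
  move=> a b hab; apply: proper_card; apply/properP; split.
    by apply/subsetP => u; rewrite !inE => h; apply: ltn_trans hab.
  by exists a; rewrite !inE ?ltnn.
have rdiff : forall a b, e a b -> p a < p b -> r b <= r a + 2 * D.
  move=> a b eab hab.
  pose S := [set z | p a <= p z < p b].
  have h1 : [set z | p z < p b] \subset [set z | p z < p a] :|: S.
    apply/subsetP => z; rewrite !inE => hz.
    by case: (ltnP (p z) (p a)) => //= ->.
  have h2 : S \subset [set u | e a u] :|: [set u | e b u].
    apply/subsetP => z; rewrite !inE => /andP[hz1 hz2].
    case: (eqVneq z a) => [->|za]; first by rewrite esym eab orbT.
    have hz1' : p a < p z.
      rewrite ltn_neqAle hz1 andbT; apply/eqP => E.
      by move/eqP: za; apply; apply: pinj.
    case ezb: (e b z); first by rewrite orbT.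
    by rewrite (umb a z b) //; rewrite esym ezb.
  have := subset_leq_card h1; have := subset_leq_card h2.
  have := leq_card_setU [set z | p z < p a] S.
  have := leq_card_setU [set u | e a u] [set u | e b u].
  have := degN a; have := degN b; rewrite /r.
  move=> d1 d2 [c1 _] [c2 _] s2 s1; lia.
pose m := 2 * D + 1.
pose col v := r v %% m.
have colp : forall a b, e a b -> col a != col b.
  have wl : forall a b, e a b -> p a < p b -> col a != col b.
    move=> a b eab hab; have h1 := rmono a b hab; have h2 := rdiff a b eab hab.
    rewrite /col eq_sym eqn_mod_dvd; last exact: ltnW.
    apply/negP => /dvdn_leq; rewrite subn_gt0 => /(_ h1).
    rewrite /m; lia.
  move=> a b eab; case: (ltngtP (p a) (p b)) => h.
  - exact: wl.
  - by rewrite eq_sym; apply: wl => //; rewrite esym.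
  - by move: eab; rewrite (pinj _ _ h) eirr.
have m0 : 0 < m by rewrite /m addn1.
pose lp (i : 'I_m) v := p [arg min_(y < v | (y == v) || (e v y && (col y == i))) p y].
pose rp (i : 'I_m) v := if col v == i then p v
  else p [arg max_(y > v | (y == v) || e v y) p y].
have lp_le : forall (i : 'I_m) v y, (y == v) || (e v y && (col y == i)) -> lp i v <= p y.
  move=> i v y hy; rewrite /lp.
  by case: arg_minnP => [|z _ hz]; [rewrite eqxx | apply: hz].
have lp_att : forall (i : 'I_m) v, lp i v = p v \/
    exists y, [/\ e v y, col y == i & lp i v = p y].
  move=> i v; rewrite /lp.
  case: arg_minnP => [|z /orP[/eqP ->|/andP[h1 h2]] _]; first by rewrite eqxx.
    by left.
  by right; exists z.
have rp_ge : forall (i : 'I_m) v, p v <= rp i v.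
  move=> i v; rewrite /rp; case: ifP => // _.
  by case: arg_maxnP => [|z _ hz]; [rewrite eqxx | apply: hz; rewrite eqxx].
have rp_ge2 : forall (i : 'I_m) v y, col v != i -> e v y -> p y <= rp i v.
  move=> i v y hcv hy; rewrite /rp (negbTE hcv).
  by case: arg_maxnP => [|z _ hz]; [rewrite eqxx | apply: hz; rewrite hy orbT].
have edge : forall (i : 'I_m) u v, e u v -> lp i u <= rp i v.
  move=> i u v euv; case: (eqVneq (col v) i) => hcv.
    by rewrite /rp hcv eqxx; apply: lp_le; rewrite euv hcv eqxx orbT.
  apply: leq_trans (lp_le i u u _) _; first by rewrite eqxx.
  by apply: rp_ge2 => //; rewrite esym.
have nonedge_wl : forall u v, p u < p v -> ~~ e u v ->
    exists i, rp i u < lp i v.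
  move=> u v huv nuv.
  exists (Ordinal (ltn_pmod (r u) m0)).
  rewrite /rp /= eqxx.
  have [->|[y [evy cy ->]]] := lp_att (Ordinal (ltn_pmod (r u) m0)) v => //.
  rewrite ltnNge; apply/negP => hyu.
  have yu : y != u.
    by apply/eqP => E; rewrite E esym in evy; rewrite evy in nuv.
  have hyu' : p y < p u.
    rewrite ltn_neqAle hyu andbT; apply/eqP => E.
    by move/eqP: yu; apply; apply: pinj.
  have eyu : e y u by apply: (umb y u v) => //; rewrite esym.
  by have := colp y u eyu; rewrite /= in cy; rewrite /col -(eqP cy) /col eqxx.
exists m; split; first by [].
exists (fun i v => INR (lp i v)), (fun i v => INR (rp i v)); split.
  move=> i v; apply: le_INR; apply/leP.
  by apply: leq_trans (lp_le i v v _) (rp_ge i v); rewrite eqxx.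
move=> u v uv; split.
  move=> euv i; split; apply: le_INR; apply/leP; apply: edge => //.
  by rewrite esym.
case euv: (e u v) => // H; exfalso.
case: (ltngtP (p u) (p v)) => h.
- have [i hi] := nonedge_wl u v h (negbT euv).
  have [_ /INR_le /leP] := H i; lia.
- have nvu : ~~ e v u by rewrite esym euv.
  have [i hi] := nonedge_wl v u h nvu.
  have [/INR_le /leP] := H i; lia.
- by move/eqP: uv; apply; apply: pinj.
Qed.
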